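(* Let $\Gamma$ be the operator defined below. If $\Gamma=\sum_iA_i\otimes B_i\otimes C_i$ (finite sum) with nonzero positive semidefinite operators $A_i$ on $\mathcal H_1\otimes\mathcal H_2$, $B_i$ on $\mathcal H_3\otimes\mathcal H_4$, $C_i$ on $\mathcal H_5\otimes\mathcal H_6$, then for every $i$ there are $\alpha,\beta,\gamma>0$ and a triple $(a,b,c)\in T$ with $(A_i,B_i,C_i)=(\alpha[\mathbf a],\beta[\mathbf b],\gamma[\mathbf c])$, where $T=\{(0,0,0),(1,2,0),(2,3,0),(3,1,0),(0,3,1),(1,1,1),(2,0,1),(3,2,1),(0,1,2),(1,3,2),(2,2,2),(3,0,2),(0,2,3),(1,0,3),(2,1,3),(3,3,3)\}$.
   Context: $\mathcal H_1,\mathcal H_3,\mathcal H_5\cong\mathbb C^2$ and $\mathcal H_2,\mathcal H_4,\mathcal H_6\cong\mathbb C^2\otimes\mathbb C^2$. On each pair ($\mathcal H_1\otimes\mathcal H_2$, $\mathcal H_3\otimes\mathcal H_4$, $\mathcal H_5\otimes\mathcal H_6$) define $|\mathbf 0\rangle=|0\rangle|00\rangle$, $|\mathbf 1\rangle=|1\rangle|01\rangle$, $|\mathbf 2\rangle=|+\rangle|10\rangle$, $|\mathbf 3\rangle=|-\rangle|11\rangle$, where $|\pm\rangle=(|0\rangle\pm|1\rangle)/\sqrt2$, and $[\mathbf x]:=|\mathbf x\rangle\langle\mathbf x|$. Let $\Gamma=\frac12\sum_{(a,b,c)\in T}[\mathbf a]\otimes[\mathbf b]\otimes[\mathbf c]$,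 the three factors acting on $\mathcal H_1\otimes\mathcal H_2$, $\mathcal H_3\otimes\mathcal H_4$, $\mathcal H_5\otimes\mathcal H_6$ respectively. *)

(* Defs.v *)
(* Operators on C^2 (x) C^2 (x) C^2 = C^8 as 8x8 matrices over an
   arbitrary numeric algebraically closed field C (covers the complex numbers). *)
From HB Require Import structures.
From mathcomp Require Import all_boot all_order all_algebra.
From mathcomp Require Export mxtens.
Set Implicit Arguments. Unset Strict Implicit. Unset Printing Implicit Defensive.
Import Order.TTheory GRing.Theory Num.Theory.
Local Open Scope ring_scope.

Definition adjmx (C : numClosedFieldType) m n (M : 'M[C]_(m, n)) : 'M[C]_(n, m) :=
  map_mx Num.conj (M^T).

Definition psd (C : numClosedFieldType) n (M : 'M[C]_n) : Prop :=
  adjmx M = M /\ forall v : 'cV[C]_n, 0 <= (adjmx v *m M *m v) 0 0.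

Definition ket0 (C : numClosedFieldType) : 'cV[C]_2 := \col_i (if i == 0 :> nat then 1 else 0).
Definition ket1 (C : numClosedFieldType) : 'cV[C]_2 := \col_i (if i == 1 :> nat then 1 else 0).
Definition ketp (C : numClosedFieldType) : 'cV[C]_2 := (sqrtC 2)^-1 *: (ket0 C + ket1 C).
Definition ketm (C : numClosedFieldType) : 'cV[C]_2 := (sqrtC 2)^-1 *: (ket0 C - ket1 C).

(* computational basis of C^2 (x) C^2: |00>,|01>,|10>,|11> are indices 0,1,2,3
   (first qubit most significant, consistent with tensmx) *)
Definition ket4 (C : numClosedFieldType) (k : 'I_4) : 'cV[C]_4 :=
  \col_i (if i == k then 1 else 0).

(* |x> on H_odd (x) H_even, x in {0,1,2,3} *)
Definition bket (C : numClosedFieldType) (x : 'I_4) : 'cV[C]_8 :=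
  (match val x with 0 => ket0 C | 1 => ket1 C | 2 => ketp C | _ => ketm C end) *t ket4 C x.

Definition bproj (C : numClosedFieldType) (x : 'I_4) : 'M[C]_8 :=
  bket C x *m adjmx (bket C x).

Definition Tset : seq (nat * nat * nat) :=
  [:: (0,0,0); (1,2,0); (2,3,0); (3,1,0); (0,3,1); (1,1,1); (2,0,1); (3,2,1);
      (0,1,2); (1,3,2); (2,2,2); (3,0,2); (0,2,3); (1,0,3); (2,1,3); (3,3,3)]%N.

Definition inT (a b c : 'I_4) : bool := (val a, val b, val c) \in Tset.

Definition Gamma (C : numClosedFieldType) : 'M[C]_(8 * 8 * 8) :=
  2^-1 *: \sum_(t : 'I_4 * 'I_4 * 'I_4 | inT t.1.1 t.1.2 t.2)
            (bproj C t.1.1 *t bproj C t.1.2) *t bproj C t.2.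

(* Main.v *)
Require Import Defs.
From HB Require Import structures.
From mathcomp Require Import all_boot all_order all_algebra mxtens ring.
Import Order.TTheory GRing.Theory Num.Theory.
Local Open Scope ring_scope.
Set Implicit Arguments. Unset Strict Implicit.

Section H.
Variable C : numClosedFieldType.

Lemma adjmxE m n (M : 'M[C]_(m,n)) i j : adjmx M i j = (M j i)^*.
Proof. by rewrite /adjmx !mxE. Qed.

Lemma adjmxK m n (M : 'M[C]_(m,n)) : adjmx (adjmx M) = M.
Proof. by apply/matrixP=> i j; rewrite !adjmxE conjCK. Qed.

Lemma adjmxM m n p (M : 'M[C]_(m,n)) (N : 'M[C]_(n,p)) :
  adjmx (M *m N) = adjmx N *m adjmx M.
Proof.
apply/matrixP=> i j; rewrite adjmxE !mxE rmorph_sum; apply: eq_bigr=> k _.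
by rewrite !adjmxE rmorphM mulrC.
Qed.

Lemma adjmxD m n (M N : 'M[C]_(m,n)) : adjmx (M + N) = adjmx M + adjmx N.
Proof. by apply/matrixP=> i j; rewrite !(adjmxE, mxE) rmorphD. Qed.

Lemma adjmxZ m n a (M : 'M[C]_(m,n)) : adjmx (a *: M) = a^* *: adjmx M.
Proof. by apply/matrixP=> i j; rewrite !(adjmxE, mxE) rmorphM. Qed.

Lemma adjmxB m n (M N : 'M[C]_(m,n)) : adjmx (M - N) = adjmx M - adjmx N.
Proof. by apply/matrixP=> i j; rewrite !(adjmxE, mxE) rmorphB. Qed.

Lemma adjmx_tens m n p q (M : 'M[C]_(m,n)) (N : 'M[C]_(p,q)) :
  adjmx (M *t N) = adjmx M *t adjmx N.
Proof. by apply/matrixP=> i j; rewrite !(adjmxE, mxE) rmorphM. Qed.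

Lemma tens11 (a b : 'M[C]_1) i j : (a *t b) i j = a 0 0 * b 0 0.
Proof. by rewrite !mxE; congr (a _ _ * b _ _); apply: ord1. Qed.

Lemma mul11 m (a : 'M[C]_(1,m)) (b : 'M[C]_(m,1)) (c : 'M[C]_1) i j :
  (a *m b *m c) i j = (a *m b) 0 0 * c 0 0.
Proof. by rewrite [LHS]mxE big_ord1 (ord1 i) (ord1 j). Qed.

Definition qf n (M : 'M[C]_n) (x : 'cV[C]_n) := (adjmx x *m M *m x) 0 0.
Definition dotv n (x y : 'cV[C]_n) := (adjmx x *m y) 0 0.

Lemma dotvC n (x y : 'cV[C]_n) : dotv y x = (dotv x y)^*.
Proof. by rewrite /dotv -adjmxE adjmxM adjmxK. Qed.

Lemma qf_tens' (P Q R : 'M[C]_8) (u v w : 'cV[C]_8) i j :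
  (adjmx ((u *t v) *t w) *m ((P *t Q) *t R) *m ((u *t v) *t w)) i j
  = qf P u * qf Q v * qf R w.
Proof. by rewrite !adjmx_tens !tensmx_mul !tens11. Qed.

Lemma qf_tens (P Q R : 'M[C]_8) (u v w : 'cV[C]_8) :
  qf ((P *t Q) *t R) ((u *t v) *t w) = qf P u * qf Q v * qf R w.
Proof. exact: (qf_tens' P Q R u v w 0 0). Qed.

Lemma entB m n (A B : 'M[C]_(m,n)) i j : (A - B) i j = A i j - B i j.
Proof. by rewrite [LHS]mxE [X in _ + X]mxE. Qed.
Lemma entZ m n a (A : 'M[C]_(m,n)) i j : (a *: A) i j = a * A i j.
Proof. by rewrite [LHS]mxE. Qed.
Lemma entD m n (A B : 'M[C]_(m,n)) i j : (A + B) i j = A i j + B i j.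
Proof. by rewrite [LHS]mxE. Qed.

Definition bf n (M : 'M[C]_n) (x y : 'cV[C]_n) := (adjmx x *m M *m y) 0 0.

Lemma bfBl n M (x y z : 'cV[C]_n) : bf M (x - y) z = bf M x z - bf M y z.
Proof. by rewrite /bf adjmxB !mulmxBl entB. Qed.
Lemma bfBr n M (x y z : 'cV[C]_n) : bf M z (x - y) = bf M z x - bf M z y.
Proof. by rewrite /bf !mulmxBr entB. Qed.
Lemma bfZl n M a (x z : 'cV[C]_n) : bf M (a *: x) z = a^* * bf M x z.
Proof. by rewrite /bf adjmxZ -!scalemxAl entZ. Qed.
Lemma bfZr n M a (x z : 'cV[C]_n) : bf M z (a *: x) = a * bf M z x.
Proof. by rewrite /bf -scalemxAr entZ. Qed.

Lemma bf_herm n (M : 'M[C]_n) x y : adjmx M = M -> bf M x y = (bf M y x)^*.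
Proof.
move=> hM; rewrite /bf -adjmxE !adjmxM adjmxK hM mulmxA. done.
Qed.

Lemma psd_ge0 n (M : 'M[C]_n) x : psd M -> 0 <= qf M x.
Proof. by case=> _ /(_ x). Qed.

Lemma dotv_self n (y : 'cV[C]_n) : dotv y y = \sum_k `|y k 0| ^+ 2.
Proof.
rewrite /dotv mxE; apply: eq_bigr=> k _; by rewrite adjmxE normCKC.
Qed.

Lemma dotv_ge0 n (y : 'cV[C]_n) : 0 <= dotv y y.
Proof. by rewrite dotv_self; apply: sumr_ge0=> k _; rewrite exprn_ge0. Qed.

Lemma dotv_eq0 n (y : 'cV[C]_n) : dotv y y = 0 -> y = 0.
Proof.
rewrite dotv_self=> h; apply/matrixP=> k j; rewrite (ord1 j) mxE.
have := psumr_eq0P (fun i _ => exprn_ge0 2 (normr_ge0 (y i 0))) h.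
by move=> /(_ k isT) /eqP; rewrite expf_eq0 /= normr_eq0 => /eqP.
Qed.

Lemma psd_ker n (M : 'M[C]_n) u : psd M -> qf M u = 0 -> M *m u = 0.
Proof.
move=> hM hu; have hH := hM.1.
set y := M *m u; set N := dotv y y; set c := qf M y.
have N0 := dotv_ge0 y; have c0 : 0 <= c := psd_ge0 y hM.
set a := c + 1.
have a0 : 0 <= a by rewrite addr_ge0.
have := psd_ge0 (a *: u - N *: y) hM.
have -> : qf M (a *: u - N *: y) = bf M (a *: u - N *: y) (a *: u - N *: y) by [].
rewrite !(bfBl, bfBr, bfZl, bfZr) !geC0_conj //.
have e1 : bf M u u = 0 by [].
have e2 : bf M y u = N by rewrite /bf /N /dotv -mulmxA.
have e3 : bf M u y = N by rewrite bf_herm // e2 geC0_conj.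
have e4 : bf M y y = c by [].
rewrite e1 e2 e3 e4 => h.
have h2 : N ^+ 2 * (c + 2) <= 0.
  have -> : N ^+ 2 * (c + 2) = - (a * (a * 0 - N * N) - N * (a * N - N * c)) by rewrite /a; ring.
  by rewrite oppr_le0.
have c2 : 0 < c + 2 by rewrite ltr_wpDl.
have : N ^+ 2 * (c + 2) = 0.
  by apply/eqP; rewrite eq_le h2 mulr_ge0 // ?exprn_ge0 // ltW.
move/eqP; rewrite mulf_eq0 expf_eq0 /= (gt_eqF c2) orbF => /eqP hN.
exact: dotv_eq0.
Qed.

Lemma dot_tens' m p (x x' : 'cV[C]_m) (y y' : 'cV[C]_p) i j :
  (adjmx (x *t y) *m (x' *t y')) i j = dotv x x' * dotv y y'.
Proof. by rewrite adjmx_tens tensmx_mul tens11. Qed.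

Definition qv (a : 'I_4) : 'cV[C]_2 :=
  match val a with 0 => ket0 C | 1 => ket1 C | 2 => ketp C | _ => ketm C end.

Lemma dot_ket4 (a a' : 'I_4) : dotv (ket4 C a) (ket4 C a') = (a == a')%:R.
Proof.
rewrite /dotv mxE (bigD1 a) //= big1.
  by rewrite !adjmxE !mxE eqxx conjC1 mul1r addr0; case: (a == a').
by move=> k hk; rewrite !adjmxE !mxE (negbTE hk) conjC0 mul0r.
Qed.

Lemma sq2 : let s := (sqrtC (2 : C))^-1 in s^* = s /\ s * s + s * s = 1.
Proof.
move=> s; have s0 : 0 <= s by rewrite invr_ge0 sqrtC_ge0 ler0n.
split; first exact: geC0_conj.
have -> : s * s = 2^-1 by rewrite /s -expr2 exprVn sqrtCK.
by rewrite [RHS](splitr 1) mul1r.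
Qed.

Lemma dot_qv (a : 'I_4) : dotv (qv a) (qv a) = 1.
Proof.
case: (sq2) => hc hs.
have s0 : 0 <= (sqrtC (2 : C))^-1 by rewrite invr_ge0 sqrtC_ge0 ler0n.
have hcN : (- (sqrtC (2 : C))^-1)^* = - (sqrtC (2 : C))^-1.
  by apply: conj_Creal; rewrite realN ger0_real.
case: a => [[|[|[|[|//]]]] ?];
  rewrite /qv /= /dotv mxE !big_ord_recr big_ord0 /= !adjmxE !mxE /=
   !(add0r, addr0, subr0, sub0r, mulr1, mulrN, mulNr, opprK, conjC1, conjC0, mul0r, mul1r) //
   ?hcN ?hc ?opprK ?mulrN ?mulNr ?opprK //.
Qed.

Lemma dot_bket (a a' : 'I_4) : dotv (bket C a) (bket C a') = (a == a')%:R.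
Proof.
transitivity (dotv (qv a) (qv a') * dotv (ket4 C a) (ket4 C a')).
  exact: (dot_tens' (qv a) (qv a') (ket4 C a) (ket4 C a') 0 0).
rewrite dot_ket4; case: eqVneq => [<-|]; rewrite ?mulr0 ?mulr1 //.
exact: dot_qv.
Qed.

Lemma qf_sum (I : finType) (P : pred I) n (F : I -> 'M[C]_n) x :
  qf (\sum_(i | P i) F i) x = \sum_(i | P i) qf (F i) x.
Proof. by rewrite /qf mulmx_sumr mulmx_suml summxE. Qed.

Lemma qf_scale n a (M : 'M[C]_n) x : qf (a *: M) x = a * qf M x.
Proof. by rewrite /qf -scalemxAr -scalemxAl entZ. Qed.

Definition nq (a : 'I_4) (u : 'cV[C]_8) := (dotv (bket C a) u)^* * dotv (bket C a) u.

Lemma nq_ge0 a u : 0 <= nq a u.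
Proof. by rewrite /nq -normCKC exprn_ge0. Qed.

Lemma qf_bproj a u : qf (bproj C a) u = nq a u.
Proof.
rewrite /qf /bproj mulmxA -mulmxA [LHS]mxE big_ord1 /nq -dotvC //.
Qed.

Lemma Gamma_qf (u v w : 'cV[C]_8) : qf (Gamma C) ((u *t v) *t w) =
  2^-1 * \sum_(t : 'I_4 * 'I_4 * 'I_4 | inT t.1.1 t.1.2 t.2) (nq t.1.1 u * nq t.1.2 v * nq t.2 w).
Proof.
rewrite /Gamma qf_scale qf_sum; congr (_ * _); apply: eq_bigr => t _.
by rewrite qf_tens !qf_bproj.
Qed.

Lemma sum_qf n (A B D : 'I_n -> 'M[C]_8) (u v w : 'cV[C]_8) :
  qf (\sum_(i < n) (A i *t B i) *t D i) ((u *t v) *t w) =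
  \sum_(i < n) qf (A i) u * qf (B i) v * qf (D i) w.
Proof. rewrite qf_sum; apply: eq_bigr => i _; exact: qf_tens. Qed.

Lemma mx0_cols m n (N : 'M[C]_(m,n)) : (forall x : 'cV_n, N *m x = 0) -> N = 0.
Proof.
move=> h; apply/matrixP=> i j; have := h (delta_mx j 0); rewrite -colE.
by move=> /matrixP/(_ i 0); rewrite !mxE.
Qed.

Lemma term_bket a' a (x : 'cV[C]_8) :
  (adjmx (bket C a') *m (bproj C a *m x)) 0 0 = (a' == a)%:R * dotv (bket C a) x.
Proof.
rewrite /bproj -mulmxA mulmxA [LHS]mxE big_ord1.
by have := dot_bket a' a; rewrite /dotv => ->.
Qed.

Definition perp (M : 'M[C]_8) :=
  forall u, (forall a, dotv (bket C a) u = 0) -> qf M u = 0.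

Lemma decomp (M : 'M[C]_8) : psd M -> perp M ->
  M = \sum_a (M *m bket C a) *m adjmx (bket C a).
Proof.
move=> hM hp.
set R := 1%:M - \sum_a bproj C a.
have hR : forall x a', dotv (bket C a') (R *m x) = 0.
  move=> x a'; rewrite /R mulmxBl mul1mx mulmx_suml /dotv mulmxBr mulmx_sumr entB summxE.
  rewrite (bigD1 a') //= big1 => [|a ha]; rewrite ?term_bket.
    by rewrite eqxx mul1r addr0 subrr.
  by rewrite eq_sym (negbTE ha) mul0r.
have MR : M *m R = 0.
  apply: mx0_cols => x; rewrite -mulmxA; apply: psd_ker => //; apply: hp => a; exact: hR.
have -> : \sum_a (M *m bket C a) *m adjmx (bket C a) = M *m \sum_a bproj C a.
  by rewrite mulmx_sumr; apply: eq_bigr => a _; rewrite /bproj mulmxA.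
by rewrite -[M in LHS]mulmx1 -[1%:M](subrK (\sum_a bproj C a)) mulmxDr -/R MR add0r.
Qed.

Lemma side_exists (M : 'M[C]_8) : psd M -> M != 0 -> perp M ->
  exists a, qf M (bket C a) != 0.
Proof.
move=> hM nz hp.
case: (pickP (fun a => qf M (bket C a) != 0)) => [a ha | h]; first by exists a.
case/negP: nz; apply/eqP; rewrite (decomp hM hp) big1 // => a _.
rewrite psd_ker ?mul0mx //; by move/negbFE/eqP: (h a).
Qed.

Lemma side_form (M : 'M[C]_8) a0 : psd M -> perp M ->
  (forall a, a != a0 -> qf M (bket C a) = 0) ->
  M = qf M (bket C a0) *: bproj C a0.
Proof.
move=> hM hp h.
have hH := hM.1.
set k := bket C a0.
have E : M = (M *m k) *m adjmx k.
  rewrite {1}(decomp hM hp) (bigD1 a0) //= big1 ?addr0 // => a ha.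
  by rewrite psd_ker ?mul0mx // h.
have E2 : M = k *m (adjmx k *m M).
  transitivity (adjmx M); first by rewrite hH.
  by rewrite {1}E !adjmxM adjmxK hH.
have Ek : M *m k = qf M k *: k.
  rewrite {1}E2 -!mulmxA [adjmx k *m (M *m k)]mx11_scalar mul_mx_scalar.
  by rewrite mulmxA.
by rewrite {1}E Ek -scalemxAl.
Qed.

Lemma psd_nz_exists (M : 'M[C]_8) : psd M -> M != 0 -> exists v, qf M v != 0.
Proof.
move=> hM nz.
case: (pickP (fun j : 'I_8 => qf M (delta_mx j 0) != 0)) => [j hj | h].
  by exists (delta_mx j 0).
case/negP: nz; apply/eqP; apply: mx0_cols => x.
have -> : M = 0; last by rewrite mul0mx.
apply/matrixP=> i j; have := psd_ker hM (eqP (negbFE (h j))); rewrite -colE.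
by move=> /matrixP/(_ i 0); rewrite !mxE.
Qed.

Lemma nq_bket x a : x != a -> nq x (bket C a) = 0.
Proof. by move=> h; rewrite /nq dot_bket (negbTE h) mulr0. Qed.

Lemma gperp1 (u v w : 'cV[C]_8) : (forall a, dotv (bket C a) u = 0) ->
  qf (Gamma C) ((u *t v) *t w) = 0.
Proof. by move=> h; rewrite Gamma_qf big1 ?mulr0 // => t _; rewrite /nq h !(conjC0, mul0r, mulr0). Qed.
Lemma gperp2 (u v w : 'cV[C]_8) : (forall a, dotv (bket C a) v = 0) ->
  qf (Gamma C) ((u *t v) *t w) = 0.
Proof. by move=> h; rewrite Gamma_qf big1 ?mulr0 // => t _; rewrite [nq _ v]/nq h !(conjC0, mul0r, mulr0). Qed.
Lemma gperp3 (u v w : 'cV[C]_8) : (forall a, dotv (bket C a) w = 0) ->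
  qf (Gamma C) ((u *t v) *t w) = 0.
Proof. by move=> h; rewrite Gamma_qf big1 ?mulr0 // => t _; rewrite [nq _ w]/nq h !(conjC0, mul0r, mulr0). Qed.

Lemma gtri a b c : ~~ inT a b c ->
  qf (Gamma C) ((bket C a *t bket C b) *t bket C c) = 0.
Proof.
move=> hn; rewrite Gamma_qf big1 ?mulr0 // => [[[x y] z]] /= ht.
case: (eqVneq x a) => [ex|nx]; last by rewrite nq_bket // !mul0r.
case: (eqVneq y b) => [ey|ny]; last by rewrite [nq y _]nq_bket // mulr0 mul0r.
case: (eqVneq z c) => [ez|nz]; last by rewrite [nq z _]nq_bket // mulr0.
by subst; rewrite ht in hn.
Qed.

End H.
Lemma latinA (a a' b c : 'I_4) : inT a b c -> inT a' b c -> a = a'.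
Proof.
move: a a' b c; do 4! case=> [[|[|[|[|//]]]] ?]; rewrite /inT //=; by move=> _ _; apply: val_inj.
Qed.
Lemma latinB (a b b' c : 'I_4) : inT a b c -> inT a b' c -> b = b'.
Proof.
move: a b b' c; do 4! case=> [[|[|[|[|//]]]] ?]; rewrite /inT //=; by move=> _ _; apply: val_inj.
Qed.
Lemma latinD (a b c c' : 'I_4) : inT a b c -> inT a b c' -> c = c'.
Proof.
move: a b c c'; do 4! case=> [[|[|[|[|//]]]] ?]; rewrite /inT //=; by move=> _ _; apply: val_inj.
Qed.

Unset Implicit Arguments.

Theorem lemma3 (C : numClosedFieldType) (n : nat) (A B D : 'I_n -> 'M[C]_8) :
  (forall i, A i != 0 /\ psd (A i)) ->
  (forall i, B i != 0 /\ psd (B i)) ->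
  (forall i, D i != 0 /\ psd (D i)) ->
  Gamma C = \sum_(i < n) (A i *t B i) *t D i ->
  forall i : 'I_n, exists alpha beta gamma : C,
    [/\ 0 < alpha, 0 < beta & 0 < gamma] /\
    exists a b c : 'I_4,
      [/\ inT a b c, A i = alpha *: bproj C a, B i = beta *: bproj C b
        & D i = gamma *: bproj C c].
Proof.
move=> hA hB hD hG i.
have key : forall u v w : 'cV[C]_8, qf (Gamma C) ((u *t v) *t w) = 0 ->
    qf (A i) u * qf (B i) v * qf (D i) w = 0.
  move=> u v w; rewrite hG sum_qf => h0.
  exact: (psumr_eq0P (fun j _ => mulr_ge0 (mulr_ge0 (psd_ge0 _ (hA j).2)
     (psd_ge0 _ (hB j).2)) (psd_ge0 _ (hD j).2)) h0 (isT : true)).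
case: (hA i) => nzA pA; case: (hB i) => nzB pB; case: (hD i) => nzD pD.
have [u0 hu0] := psd_nz_exists pA nzA.
have [v0 hv0] := psd_nz_exists pB nzB.
have [w0 hw0] := psd_nz_exists pD nzD.
have perpA : perp (A i).
  move=> u hu; have := key u v0 w0 (gperp1 v0 w0 hu).
  by move/eqP; rewrite !mulf_eq0 (negbTE hv0) (negbTE hw0) !orbF => /eqP.
have perpB : perp (B i).
  move=> v hv; have := key u0 v w0 (gperp2 u0 w0 hv).
  by move/eqP; rewrite !mulf_eq0 (negbTE hu0) (negbTE hw0) orbF orFb => /eqP.
have perpD : perp (D i).
  move=> w hw; have := key u0 v0 w (gperp3 u0 v0 hw).
  by move/eqP; rewrite !mulf_eq0 (negbTE hu0) (negbTE hv0) !orFb => /eqP.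
have tri : forall a b c, qf (A i) (bket C a) != 0 -> qf (B i) (bket C b) != 0 ->
    qf (D i) (bket C c) != 0 -> inT a b c.
  move=> a b c ha hb hc; apply/negPn/negP => hn.
  by move: (key _ _ _ (@gtri C _ _ _ hn)); apply/eqP; rewrite !mulf_neq0.
have [a0 ha0] := side_exists pA nzA perpA.
have [b0 hb0] := side_exists pB nzB perpB.
have [c0 hc0] := side_exists pD nzD perpD.
have fA := side_form (a0:=a0) pA perpA.
have fB := side_form (a0:=b0) pB perpB.
have fD := side_form (a0:=c0) pD perpD.
exists (qf (A i) (bket C a0)), (qf (B i) (bket C b0)), (qf (D i) (bket C c0)).
split.
  by split; rewrite lt0r ?ha0 ?hb0 ?hc0 psd_ge0.
exists a0, b0, c0; split.
- exact: tri.
- apply: fA => a ha; apply/eqP; apply: contraNT ha => hS; apply/eqP.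
  exact: (latinA (tri _ _ _ hS hb0 hc0) (tri _ _ _ ha0 hb0 hc0)).
- apply: fB => b hb; apply/eqP; apply: contraNT hb => hS; apply/eqP.
  exact: (latinB (tri _ _ _ ha0 hS hc0) (tri _ _ _ ha0 hb0 hc0)).
- apply: fD => c hc; apply/eqP; apply: contraNT hc => hS; apply/eqP.
  exact: (latinD (tri _ _ _ ha0 hb0 hS) (tri _ _ _ ha0 hb0 hc0)).
Qed.
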